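(* Let $f\colon\prod_{i\in[n]}X_i\to Y$ satisfy condition (BC) and $\Phi_k^-\le\Phi_k^+$ for all $k\in[n]$, and let $\varphi_k\colon X_k\to Y$ ($k\in[n]$) be maps satisfying the boundary condition with $\Phi_k^-\le\varphi_k\le\Phi_k^+$ for all $k$. Put $a_k=\varphi_k(0_{X_k})$, $b_k=\varphi_k(1_{X_k})$, and for $I\subseteq[n]$ let $\mathbf{e}_I\in Y^n$ have $i$-th component $b_i$ if $i\in I$ and $a_i$ if $i\notin I$. Then a polynomial function $p\colon Y^n\to Y$ satisfies $f(\mathbf{x})=p(\varphi_1(x_1),\ldots,\varphi_n(x_n))$ for all $\mathbf{x}$ if and only if $p(\mathbf{e}_I)=f(\widehat{\mathbf{1}}_I)$ for all $I\subseteq[n]$.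
   Context: $Y$ is a finite distributive lattice identified with a sublattice of $\mathcal{P}(U)$ for a finite set $U$, with least element $0=\emptyset$, greatest element $1=U$, and $\wedge,\vee$ being intersection and union; $\overline{S}=U\setminus S$. For $S\subseteq U$, $\operatorname{cl}(S)=\bigwedge\{y\in Y: y\ge S\}$, $\operatorname{int}(S)=\bigvee\{y\in Y: y\le S\}$. $[n]=\{1,\ldots,n\}$; $X_1,\ldots,X_n$ are arbitrary sets with at least two elements, each with two fixed distinct elements $0_{X_k},1_{X_k}$ (written $0,1$). For $\mathbf{x}\in\prod_i X_i$ and $a\in X_k$, $\mathbf{x}_k^a$ is $\mathbf{x}$ with $k$-th component replaced by $a$. For $I\subseteq[n]$, $\widehat{\mathbf{1}}_I$ is the tuple whose $i$-th component is $1_{X_i}$ if $i\in I$ and $0_{X_i}$ otherwise. A map $\varphi_k\colon X_k\to Y$ satisfies the boundary condition if $\varphi_k(0_{X_k})\le\varphi_k(x_k)\le\varphi_k(1_{X_k})$ for all $x_k$. A polynomial function $Y^n\to Y$ is a composition of $\wedge,\vee$ with variables and constants. Condition (BC): $f(\mathbf{x}_k^0)\le f(\mathbf{x})\le f(\mathbf{x}_k^1)$ for all $k$ and $\mathbf{x}$. For $k\in[n]$, $a_k\in X_k$: $$\Phi_k^-(a_k)=\bigvee_{\mathbf{x}:\,x_k=a_k}\operatorname{cl}\big(f(\mathbf{x})\wedge\overline{f(\mathbf{x}_k^0)}\big),\qquad \Phi_k^+(a_k)=\bigwedge_{\mathbf{x}:\,x_k=a_k}\operatorname{int}\big(f(\mathbf{x})\vee\overline{f(\mathbf{x}_k^1)}\big),$$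 ranging over all $\mathbf{x}$ with $k$-th component $a_k$. *)

(* Defs.v *)
From HB Require Import structures.
From mathcomp Require Import all_boot.
From Stdlib Require Import ClassicalEpsilon.
Set Implicit Arguments. Unset Strict Implicit. Unset Printing Implicit Defensive.

Definition pb (P : Prop) : bool :=
  if excluded_middle_informative P then true else false.

Section Defs.
Variable U : finType.

(* Y : a (finite, distributive) sublattice of P(U) containing 0 = set0 and 1 = setT *)
Definition is_sublattice01 (Y : {set {set U}}) : Prop :=
  [/\ set0 \in Y, setT \in Y,
      (forall y z, y \in Y -> z \in Y -> y :|: z \in Y) &
      (forall y z, y \in Y -> z \in Y -> y :&: z \in Y)].

Definition cl (Y : {set {set U}}) (S : {set U}) : {set U} :=
  \bigcap_(y in Y | S \subset y) y.
Definition int (Y : {set {set U}}) (S : {set U}) : {set U} :=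
  \bigcup_(y in Y | y \subset S) y.

Variable n : nat.
Variable X : 'I_n -> Type.

Definition upd (x : forall i, X i) (k : 'I_n) (a : X k) : forall i, X i :=
  fun i => match k =P i with
           | ReflectT e => eq_rect k X a i e
           | ReflectF _ => x i
           end.

Definition hat1 (x0 x1 : forall i, X i) (I : {set 'I_n}) : forall i, X i :=
  fun i => if i \in I then x1 i else x0 i.

Arguments upd x k a i : clear implicits.
Definition BC (x0 x1 : forall i, X i) (f : (forall i, X i) -> {set U}) : Prop :=
  forall (k : 'I_n) (x : forall i, X i),
    f (upd x k (x0 k)) \subset f x /\ f x \subset f (upd x k (x1 k)).

(* Phi_k^-(a) = join (in Y, i.e. union) over x with x_k = a of cl(f x /\ ~ f(x_k^0)) *)
Definition PhiMinus (Y : {set {set U}}) (x0 : forall i, X i)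
    (f : (forall i, X i) -> {set U}) (k : 'I_n) (a : X k) : {set U} :=
  [set u | pb (exists x : forall i, X i,
                 x k = a /\ u \in cl Y (f x :&: ~: f (upd x k (x0 k))))].

(* Phi_k^+(a) = meet (in Y, i.e. intersection) over x with x_k = a of int(f x \/ ~ f(x_k^1)) *)
Definition PhiPlus (Y : {set {set U}}) (x1 : forall i, X i)
    (f : (forall i, X i) -> {set U}) (k : 'I_n) (a : X k) : {set U} :=
  [set u | pb (forall x : forall i, X i,
                 x k = a -> u \in int Y (f x :|: ~: f (upd x k (x1 k))))].

End Defs.

Inductive lpoly (U : finType) (n : nat) : Type :=
| LVar of 'I_n
| LConst of {set U}
| LMeet of lpoly U n & lpoly U n
| LJoin of lpoly U n & lpoly U n.

Fixpoint lconsts_in (U : finType) (n : nat) (Y : {set {set U}}) (t : lpoly U n) : bool :=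
  match t with
  | LVar _ => true
  | LConst c => c \in Y
  | LMeet t1 t2 => lconsts_in Y t1 && lconsts_in Y t2
  | LJoin t1 t2 => lconsts_in Y t1 && lconsts_in Y t2
  end.

Fixpoint leval (U : finType) (n : nat) (t : lpoly U n) (e : 'I_n -> {set U}) : {set U} :=
  match t with
  | LVar i => e i
  | LConst c => c
  | LMeet t1 t2 => leval t1 e :&: leval t2 e
  | LJoin t1 t2 => leval t1 e :|: leval t2 e
  end.

(* Main.v *)
Require Import Defs.
From HB Require Import structures.
From mathcomp Require Import all_boot.
From Stdlib Require Import FunctionalExtensionality ClassicalEpsilon.

Lemma pbT (P : Prop) : P -> pb P = true.
Proof. by rewrite /pb; case: excluded_middle_informative. Qed.
Lemma pbE (P : Prop) : pb P = true -> P.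
Proof. by rewrite /pb; case: excluded_middle_informative. Qed.

Lemma upd_same n (X : 'I_n -> Type) (y : forall i, X i) k (a : X k) :
  upd y a k = a.
Proof.
rewrite /upd; case: eqP => [e|//].
by rewrite (eq_irrelevance e erefl).
Qed.

Lemma upd_other n (X : 'I_n -> Type) (y : forall i, X i) k (a : X k) i :
  k != i -> upd y a i = y i.
Proof. by rewrite /upd; case: eqP. Qed.

Lemma leval_ext (U : finType) n (t : lpoly U n) e e' :
  (forall i, e i = e' i) -> leval t e = leval t e'.
Proof. by move=> H; elim: t => //= [t1 -> t2 ->|t1 -> t2 ->]. Qed.

Lemma leval_mono (U : finType) n (t : lpoly U n) (e e' : 'I_n -> {set U}) u :
  (forall i, u \in e i -> u \in e' i) -> u \in leval t e -> u \in leval t e'.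
Proof.
move=> H; elim: t => /= [i|c|t1 IH1 t2 IH2|t1 IH1 t2 IH2] //; first exact: H.
  by rewrite !inE => /andP[/IH1 -> /IH2 ->].
by rewrite !inE => /orP[/IH1 ->|/IH2 ->] //; rewrite orbT.
Qed.

Lemma box (U : finType) n (t : lpoly U n) (a b y : 'I_n -> {set U}) u :
  (forall i, a i \subset y i) -> (forall i, y i \subset b i) ->
  u \in leval t y <->
  exists I : {set 'I_n}, u \in leval t (fun i => if i \in I then b i else a i)
     /\ forall i, i \in I -> u \in y i.
Proof.
move=> Ha Hb; split.
  elim: t => /= [j|c|t1 IH1 t2 IH2|t1 IH1 t2 IH2].
  - move=> uy; exists [set j]; rewrite !inE eqxx; split; first exact: (subsetP (Hb j)).
    by move=> i; rewrite inE => /eqP ->.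
  - by move=> uc; exists set0; split=> // i; rewrite inE.
  - rewrite inE => /andP[/IH1 [I [h1 h1']] /IH2 [J [h2 h2']]].
    exists (I :|: J); split; last first.
      by move=> i; rewrite inE => /orP[/h1'|/h2'].
    rewrite in_setI; apply/andP; split.
    + move: h1; apply: leval_mono => i; rewrite in_setU; case: (i \in I) => //.
      case: (i \in J) => // ua; exact: (subsetP (subset_trans (Ha i) (Hb i))).
    + move: h2; apply: leval_mono => i; rewrite in_setU; case: (i \in J); rewrite ?orbT //.
      case: (i \in I) => // ua; exact: (subsetP (subset_trans (Ha i) (Hb i))).
  - rewrite inE => /orP[/IH1 [I [h1 h1']]|/IH2 [I [h1 h1']]]; exists I;
      by rewrite inE h1 ?orbT.
move=> [I [h1 h2]]; move: h1; apply: leval_mono => i.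
case: ifP => iI ua; first exact: h2.
exact: (subsetP (Ha i)).
Qed.
Section Key.
Variables (U : finType) (Y : {set {set U}}) (n : nat) (X : 'I_n -> Type)
  (x0 x1 : forall i, X i) (f : (forall i, X i) -> {set U})
  (HBC : BC x0 x1 f) (phi : forall k, X k -> {set U})
  (Hphi : forall k (a : X k),
      PhiMinus Y x0 f a \subset phi k a /\ phi k a \subset PhiPlus Y x1 f a).

Lemma OV y k u : u \in f y <->
  u \in f (upd y (x0 k)) \/ (u \in f (upd y (x1 k)) /\ u \in phi k (y k)).
Proof.
have [H0 H1] := HBC k y; have [P1 P2] := Hphi k (y k).
split.
  move=> uy; case: (boolP (u \in f (upd y (x0 k)))) => u0; [by left|right].
  split; first exact: (subsetP H1).
  apply: (subsetP P1); rewrite inE; apply: pbT; exists y; split=> //.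
  apply/bigcapP => z /andP[_ /subsetP]; apply; rewrite !inE uy /=.
  exact: u0.
case=> [/(subsetP H0) //|[u1 up]].
move: (subsetP P2 _ up); rewrite inE => /pbE /(_ y erefl) /bigcupP [z /andP[_ sz] uz].
by move: (subsetP sz _ uz); rewrite !inE u1 orbF.
Qed.

Definition zz (x : forall i, X i) (S I : {set 'I_n}) : forall i, X i :=
  fun i => if i \in S then x i else if i \in I then x1 i else x0 i.

Lemma key_seq (s : seq 'I_n) x I0 u :
  let S := [set i in s] in
  u \in f (zz x S I0) <->
  exists I : {set 'I_n}, [/\ I \subset S, u \in f (zz x set0 ((I0 :\: S) :|: I))
                & forall i, i \in I -> u \in phi i (x i)].
Proof.
elim: s I0 => [|k s IH] I0 /=.
  have -> : [set i in [::]] = set0 :> {set 'I_n} by apply/setP=> i; rewrite !inE.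
  split.
    by move=> h; exists set0; rewrite sub0set setD0 setU0; split=> // i; rewrite inE.
  by move=> [I []]; rewrite subset0 => /eqP -> h _; move: h; rewrite setD0 setU0.
have -> : [set i in k :: s] = k |: [set i in s] :> {set 'I_n}
  by apply/setP=> i; rewrite !inE.
set S := [set i in s].
case: (boolP (k \in S)) => kS.
  by rewrite (setUidPr _) ?sub1set //; apply: IH.
have E0 : upd (zz x (k |: S) I0) (x0 k) = zz x S (I0 :\ k).
  apply: functional_extensionality_dep => i.
  case: (eqVneq k i) => [<-|ne]; first by rewrite upd_same /zz (negbTE kS) !inE eqxx.
  rewrite upd_other // /zz !inE eq_sym (negbTE ne) //.
have E1 : upd (zz x (k |: S) I0) (x1 k) = zz x S (k |: I0).
  apply: functional_extensionality_dep => i.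
  case: (eqVneq k i) => [<-|ne]; first by rewrite upd_same /zz (negbTE kS) !inE eqxx.
  rewrite upd_other // /zz !inE eq_sym (negbTE ne) //.
have Ek : zz x (k |: S) I0 k = x k by rewrite /zz !inE eqxx.
rewrite (OV _ k) E0 E1 Ek IH IH.
have D0 : (I0 :\ k) :\: S = I0 :\: (k |: S).
  by apply/setP=> i; rewrite !inE; case: (i == k); rewrite ?andbF.
have D1 : forall I, (k |: I0) :\: S :|: I = I0 :\: (k |: S) :|: (k |: I).
  move=> I; apply/setP=> i; rewrite !inE; move: kS; rewrite inE; case: (eqVneq i k) => [->|] /=.
    by move=> /negbTE ->.
  by case: (i \in s); case: (i \in I); case: (i \in I0).
rewrite D0; split.
  case=> [[I [sI h hp]]|[[I [sI h hp]] up]].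
    exists I; split=> //; apply: (subset_trans sI); exact: subsetUr.
  exists (k |: I); split; first by rewrite setUSS.
    by rewrite -D1.
  by move=> i; rewrite !inE => /orP[/eqP ->|]; [exact: up|apply: hp].
case=> I [sI h hp]; case: (boolP (k \in I)) => kI; [right|left].
  split; last exact: hp.
  exists (I :\ k); split.
  - apply/subsetP=> i; rewrite inE => /andP[ne iI]; move: (subsetP sI _ iI).
    by rewrite inE (negbTE ne).
  - by rewrite D1 setD1K.
  - by move=> i; rewrite inE => /andP[_]; apply: hp.
exists I; split=> //; apply/subsetP=> i iI; move: (subsetP sI _ iI); rewrite !inE.
by case/orP=> // /eqP ei; move: kI; rewrite -ei iI.

Qed.

Lemma key x u : u \in f x <->
  exists I : {set 'I_n}, u \in f (hat1 x0 x1 I) /\ forall i, i \in I -> u \in phi i (x i).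
Proof.
have := key_seq (enum 'I_n) x set0 u => /=.
have -> : [set i in enum 'I_n] = setT by apply/setP=> i; rewrite !inE mem_enum.
have -> : zz x setT set0 = x by apply: functional_extensionality_dep => i; rewrite /zz inE.
move=> ->; rewrite set0D.
have E : forall I, zz x set0 I = hat1 x0 x1 I
  by move=> I; apply: functional_extensionality_dep => i; rewrite /zz inE.
split; case=> I.
  by case=> _ h hp; exists I; split=> //; rewrite -E; move: h; rewrite set0U.
by case=> h hp; exists I; split; rewrite ?subsetT ?E ?set0D ?set0U.
Qed.
End Key.

Theorem mainTheorem8
  (U : finType) (Y : {set {set U}}) (HY : is_sublattice01 Y)
  (n : nat) (X : 'I_n -> Type) (x0 x1 : forall i, X i)
  (Hx01 : forall i, x0 i <> x1 i)
  (f : (forall i, X i) -> {set U}) (HfY : forall x, f x \in Y)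
  (HBC : BC x0 x1 f)
  (HPhi : forall k (a : X k), PhiMinus Y x0 f a \subset PhiPlus Y x1 f a)
  (phi : forall k, X k -> {set U})
  (HphiY : forall k (a : X k), phi k a \in Y)
  (Hbound : forall k (a : X k), phi k (x0 k) \subset phi k a /\ phi k a \subset phi k (x1 k))
  (Hphi : forall k (a : X k),
      PhiMinus Y x0 f a \subset phi k a /\ phi k a \subset PhiPlus Y x1 f a)
  (t : lpoly U n) (Ht : lconsts_in Y t) :
  (forall x : forall i, X i, f x = leval t (fun i => phi i (x i))) <->
  (forall I : {set 'I_n},
      leval t (fun i => if i \in I then phi i (x1 i) else phi i (x0 i))
      = f (hat1 x0 x1 I)).
Proof.
split.
  move=> H I; rewrite H; apply: leval_ext => i; rewrite /hat1; by case: (i \in I).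
move=> H x; apply/setP=> u.
have K := @key _ _ _ _ _ _ _ HBC _ Hphi x u.
have Ha : forall i, phi i (x0 i) \subset phi i (x i) by move=> i; case: (Hbound i (x i)).
have Hb : forall i, phi i (x i) \subset phi i (x1 i) by move=> i; case: (Hbound i (x i)).
have B := @box _ _ t (fun i => phi i (x0 i)) (fun i => phi i (x1 i)) (fun i => phi i (x i)) u Ha Hb.
apply/idP/idP.
  move/K => [I [h hp]]; apply/B; by exists I; rewrite H.
move/B => [I [h hp]]; apply/K; exists I; split=> //; by rewrite -H.
Qed.
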